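(* Let $K_0,K_1>0$, $\alpha\geq-2$ and $p>1$. Let $F\in\mathcal{C}^2([0,T))$ satisfy $$\ddot F(t)+K_0(1+t)^{-1}\dot F(t)\geq K_1(1+t)^{\alpha}|F(t)|^p\quad\text{for all } t\in[0,T).$$ If $F(0)>0$ and $\dot F(0)>0$, then $T<\infty$, i.e. $F$ blows up in finite time (cannot be extended as such a function to all of $[0,\infty)$). *)

(* Defs.v *)
From Stdlib Require Import Reals Lra.
From Coquelicot Require Import Coquelicot.
Open Scope R_scope.

(* |x|^p for real exponent p > 0, with the convention 0^p = 0
   (Stdlib's Rpower 0 p is not 0). *)
Definition abspow (x p : R) : R :=
  if Req_EM_T x 0 then 0 else Rpower (Rabs x) p.

Definition C2_on_0T (T : Rbar) (F F1 F2 : R -> R) : Prop :=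
  (forall t, 0 < t -> Rbar_lt t T ->
     is_derive F t (F1 t) /\ is_derive F1 t (F2 t) /\ continuous F2 t) /\
  filterlim (fun h => (F h - F 0) / h) (at_right 0) (locally (F1 0)) /\
  filterlim (fun h => (F1 h - F1 0) / h) (at_right 0) (locally (F2 0)) /\
  filterlim F2 (at_right 0) (locally (F2 0)).

(* Main.v *)
Require Import Defs.
From Stdlib Require Import Reals Lra.
From Coquelicot Require Import Coquelicot.
Open Scope R_scope.

Lemma der_eq (f : R -> R) x l l' : is_derive f x l -> l = l' -> is_derive f x l'.
Proof. intros H ->; exact H. Qed.

Lemma der_mult (f g : R -> R) x a b : is_derive f x a -> is_derive g x b ->
  is_derive (fun t => f t * g t) x (a * g x + f x * b).
Proof.
  intros Ha Hb. apply is_derive_Reals. apply is_derive_Reals in Ha. apply is_derive_Reals in Hb.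
  exact (derivable_pt_lim_mult f g x a b Ha Hb).
Qed.

Lemma der_plus (f g : R -> R) x a b : is_derive f x a -> is_derive g x b ->
  is_derive (fun t => f t + g t) x (a + b).
Proof.
  intros Ha Hb. apply is_derive_Reals. apply is_derive_Reals in Ha. apply is_derive_Reals in Hb.
  exact (derivable_pt_lim_plus f g x a b Ha Hb).
Qed.

Lemma der_minus (f g : R -> R) x a b : is_derive f x a -> is_derive g x b ->
  is_derive (fun t => f t - g t) x (a - b).
Proof.
  intros Ha Hb. apply is_derive_Reals. apply is_derive_Reals in Ha. apply is_derive_Reals in Hb.
  exact (derivable_pt_lim_minus f g x a b Ha Hb).
Qed.

Lemma der_scal (f : R -> R) x a c : is_derive f x a ->
  is_derive (fun t => c * f t) x (c * a).
Proof.
  intros Ha. apply is_derive_Reals. apply is_derive_Reals in Ha.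
  exact (derivable_pt_lim_scal f c x a Ha).
Qed.

Lemma der_id1 x : is_derive (fun t => 1 + t) x 1.
Proof. auto_derive; auto; ring. Qed.

Lemma der_Rpow (f : R -> R) x a y : 0 < f x -> is_derive f x a ->
  is_derive (fun t => Rpower (f t) y) x (y * Rpower (f x) (y - 1) * a).
Proof.
  intros Hp Ha. apply is_derive_Reals. apply is_derive_Reals in Ha.
  change (derivable_pt_lim (comp (fun z => Rpower z y) f) x (y * Rpower (f x) (y - 1) * a)).
  apply (derivable_pt_lim_comp f (fun z => Rpower z y) x a). exact Ha.
  apply derivable_pt_lim_power. exact Hp.
Qed.

Lemma der_ln1 x : 0 < 1 + x -> is_derive (fun t => ln (1 + t)) x (/ (1 + x)).
Proof.
  intros Hp. apply is_derive_Reals.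
  replace (/ (1 + x)) with (/ (1 + x) * 1) by ring.
  change (derivable_pt_lim (comp ln (fun t => 1 + t)) x (/ (1 + x) * 1)).
  apply (derivable_pt_lim_comp (fun t => 1 + t) ln x 1). apply is_derive_Reals, der_id1.
  apply is_derive_Reals. apply is_derive_ln. exact Hp.
Qed.

Lemma mono (g dg : R -> R) a : (forall x, a <= x -> is_derive g x (dg x)) ->
  (forall x, a <= x -> 0 <= dg x) -> forall x y, a <= x -> x <= y -> g x <= g y.
Proof.
  intros Hd Hp x y Hx Hxy.
  destruct (MVT_gen g x y dg) as [c [Hc Heq]].
  - intros z Hz. apply Hd. rewrite Rmin_left in Hz by lra. lra.
  - intros z Hz. rewrite Rmin_left in Hz by lra. apply continuity_pt_filterlim.
    apply (ex_derive_continuous (V := R_NormedModule)). exists (dg z). apply Hd. lra.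
  - rewrite Rmin_left in Hc by lra. rewrite Rmax_right in Hc by lra.
    assert (0 <= dg c) by (apply Hp; lra).
    assert (0 <= dg c * (y - x)) by (apply Rmult_le_pos; lra). lra.
Qed.

Lemma mono_dec (g dg : R -> R) a : (forall x, a <= x -> is_derive g x (dg x)) ->
  (forall x, a <= x -> dg x <= 0) -> forall x y, a <= x -> x <= y -> g y <= g x.
Proof.
  intros Hd Hp x y Hx Hxy.
  destruct (MVT_gen g x y dg) as [c [Hc Heq]].
  - intros z Hz. apply Hd. rewrite Rmin_left in Hz by lra. lra.
  - intros z Hz. rewrite Rmin_left in Hz by lra. apply continuity_pt_filterlim.
    apply (ex_derive_continuous (V := R_NormedModule)). exists (dg z). apply Hd. lra.
  - rewrite Rmin_left in Hc by lra. rewrite Rmax_right in Hc by lra.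
    assert (dg c <= 0) by (apply Hp; lra).
    assert (0 <= - dg c * (y - x)) by (apply Rmult_le_pos; lra). lra.
Qed.

Lemma Rpow_pos x y : 0 < Rpower x y.
Proof. unfold Rpower. apply exp_pos. Qed.

Lemma Rpow_m1 x y : 0 < x -> Rpower x (y - 1) = Rpower x y * / x.
Proof.
  intros Hx. unfold Rminus. rewrite Rpower_plus, Rpower_Ropp, Rpower_1 by exact Hx. reflexivity.
Qed.

Lemma Rpow_p1 x y : 0 < x -> Rpower x (y + 1) = Rpower x y * x.
Proof. intros Hx. rewrite Rpower_plus, Rpower_1 by exact Hx. reflexivity. Qed.

Lemma abspow_nonneg x p : 0 <= abspow x p.
Proof. unfold abspow. destruct (Req_EM_T x 0). lra. left; apply Rpow_pos. Qed.

Lemma abspow_pos_eq x p : 0 < x -> abspow x p = Rpower x p.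
Proof. intros Hx. unfold abspow. destruct (Req_EM_T x 0). lra. rewrite Rabs_pos_eq by lra. reflexivity. Qed.

Theorem lemma7p1 (K0 K1 alpha p : R) (T : Rbar) (F F1 F2 : R -> R) :
  0 < K0 -> 0 < K1 -> -2 <= alpha -> 1 < p ->
  Rbar_lt 0 T ->
  C2_on_0T T F F1 F2 ->
  (forall t, 0 <= t -> Rbar_lt t T ->
     F2 t + K0 * / (1 + t) * F1 t >= K1 * Rpower (1 + t) alpha * abspow (F t) p) ->
  0 < F 0 -> 0 < F1 0 ->
  Rbar_lt T p_infty.
Proof.
  intros HK0 HK1 Hal Hp HT [HC [Hq0 [Hq1 _]]] Hineq HF0 HF10.
  destruct T as [r| |]; [exact I | exfalso | contradiction].
  assert (HD : forall t, 0 < t -> is_derive F t (F1 t) /\ is_derive F1 t (F2 t)).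
  { intros t Ht. destruct (HC t Ht I) as [H1 [H2 _]]. split; assumption. }
  assert (Hin : forall t, 0 <= t ->
     F2 t + K0 * / (1 + t) * F1 t >= K1 * Rpower (1 + t) alpha * abspow (F t) p).
  { intros t Ht. apply Hineq; [exact Ht | exact I]. }
  clear Hineq HC.
  assert (Ht0 : exists t0, 0 < t0 /\ 0 < F t0 /\ 0 < F1 t0).
  { apply filterlim_locally with (eps := mkposreal _ HF10) in Hq0.
    apply filterlim_locally with (eps := mkposreal _ Rlt_0_1) in Hq1.
    destruct (filter_and _ _ Hq0 Hq1) as [eps Heps].
    set (h := Rmin (eps / 2) (F1 0 / (2 * (Rabs (F2 0) + 1)))).
    assert (Hpos2 : 0 < Rabs (F2 0) + 1) by (generalize (Rabs_pos (F2 0)); lra).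
    assert (Hhp : 0 < h).
    { unfold h. apply Rmin_pos. generalize (cond_pos eps); lra.
      apply Rdiv_lt_0_compat; lra. }
    assert (Hh1 : h <= eps / 2) by apply Rmin_l.
    assert (Hh2 : h <= F1 0 / (2 * (Rabs (F2 0) + 1))) by apply Rmin_r.
    assert (Hb : ball 0 eps h).
    { change (Rabs (h - 0) < eps). rewrite Rminus_0_r, Rabs_pos_eq by lra.
      generalize (cond_pos eps); lra. }
    destruct (Heps h Hb Hhp) as [B1 B2].
    change (Rabs ((F h - F 0) / h - F1 0) < F1 0) in B1.
    change (Rabs ((F1 h - F1 0) / h - F2 0) < 1) in B2.
    apply Rabs_def2 in B1. apply Rabs_def2 in B2.
    exists h. split; [exact Hhp|]. split.
    - assert (0 < (F h - F 0) / h) by lra.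
      assert (F h - F 0 = (F h - F 0) / h * h) by (field; lra).
      assert (0 < (F h - F 0) / h * h) by (apply Rmult_lt_0_compat; lra). lra.
    - assert (E : F1 h - F1 0 = (F1 h - F1 0) / h * h) by (field; lra).
      assert (Hq : (F1 h - F1 0) / h > - (Rabs (F2 0) + 1)).
      { generalize (Rabs_Ropp (F2 0)) (Rle_abs (- F2 0)); lra. }
      assert (h * (2 * (Rabs (F2 0) + 1)) <= F1 0).
      { apply Rmult_le_compat_r with (r := 2 * (Rabs (F2 0) + 1)) in Hh2; [|lra].
        replace (F1 0 / (2 * (Rabs (F2 0) + 1)) * (2 * (Rabs (F2 0) + 1))) with (F1 0) in Hh2
          by (field; lra). lra. }
      nra. }
  destruct Ht0 as [t0 [Ht0 [HFt0 HF1t0]]].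

  assert (HA : forall t, t0 <= t -> 0 < F1 t).
  { assert (Hw : forall x, t0 <= x -> is_derive (fun t => Rpower (1 + t) K0 * F1 t) x
        (K0 * Rpower (1 + x) (K0 - 1) * 1 * F1 x + Rpower (1 + x) K0 * F2 x)).
    { intros x Hx. apply (der_mult (fun t => Rpower (1 + t) K0) F1).
      apply (der_Rpow (fun t => 1 + t)). lra. apply der_id1. apply HD; lra. }
    assert (Hm := mono _ _ t0 Hw).
    intros t Ht.
    assert (Hle : Rpower (1 + t0) K0 * F1 t0 <= Rpower (1 + t) K0 * F1 t).
    { apply Hm; [|lra|lra]. intros x Hx.
      rewrite Rpow_m1 by lra.
      assert (Hi := Hin x ltac:(lra)).
      assert (0 <= K1 * Rpower (1 + x) alpha * abspow (F x) p).
      { apply Rmult_le_pos. apply Rmult_le_pos. lra. left; apply Rpow_pos. apply abspow_nonneg. }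
      assert (E : K0 * (Rpower (1 + x) K0 * / (1 + x)) * 1 * F1 x + Rpower (1 + x) K0 * F2 x
                = Rpower (1 + x) K0 * (F2 x + K0 * / (1 + x) * F1 x)) by ring.
      rewrite E. apply Rmult_le_pos. left; apply Rpow_pos. lra. }
    assert (0 < Rpower (1 + t0) K0 * F1 t0) by (apply Rmult_lt_0_compat; [apply Rpow_pos|lra]).
    assert (Hpp := Rpow_pos (1 + t) K0). nra. }
  assert (HFm : forall t, t0 <= t -> F t0 <= F t).
  { intros t Ht. apply (mono F F1 t0); [| | lra | lra].
    intros x Hx; apply HD; lra. intros x Hx; left; apply HA; lra. }
  set (F0 := F t0) in *.
  assert (HFpos : forall t, t0 <= t -> 0 < F t) by (intros t Ht; generalize (HFm t Ht); lra).
  assert (HB : forall t, t0 <= t ->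
    (1 + t) * (F1 t + (1 + t) * F2 t) >= K1 * Rpower (F t) p - K0 * ((1 + t) * F1 t)).
  { intros t Ht. assert (Hi := Hin t ltac:(lra)).
    rewrite abspow_pos_eq in Hi by (apply HFpos; lra).
    set (u := 1 + t) in *. assert (Hu : 1 <= u) by (unfold u; lra).
    assert (HA2 : 1 <= Rpower u alpha * (u * u)).
    { replace (u * u) with (Rpower u 2).
      rewrite <- Rpower_plus. rewrite <- (Rpower_O u) by lra.
      apply Rle_Rpower; lra.
      replace 2 with (INR 2) by (simpl; ring). rewrite Rpower_pow by lra. simpl; ring. }
    assert (HPp := Rpow_pos (F t) p).
    assert (HF1p := HA t Ht).
    assert (E : u * u * (F2 t + K0 * / u * F1 t) = u * u * F2 t + K0 * u * F1 t) by (field; lra).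
    assert (H2 : u * u * (F2 t + K0 * / u * F1 t) >= u * u * (K1 * Rpower u alpha * Rpower (F t) p)).
    { apply Rle_ge, Rmult_le_compat_l; [nra | lra]. }
    rewrite E in H2.
    assert (K1 * Rpower (F t) p <= u * u * (K1 * Rpower u alpha * Rpower (F t) p)).
    { replace (u * u * (K1 * Rpower u alpha * Rpower (F t) p)) with
        ((Rpower u alpha * (u * u)) * (K1 * Rpower (F t) p)) by ring.
      assert (0 < K1 * Rpower (F t) p) by nra. nra. }
    assert (0 < u * F1 t) by nra. nra. }

  set (D := fun t => (1 + t) * F1 t).
  set (D' := fun t => F1 t + (1 + t) * F2 t).
  assert (HDd : forall x, t0 <= x -> is_derive D x (D' x)).
  { intros x Hx. unfold D, D'. eapply der_eq.
    apply (der_mult (fun t => 1 + t) F1). apply der_id1. apply HD; lra. rewrite Rmult_1_l; reflexivity. }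
  assert (HDp : forall t, t0 <= t -> 0 < D t).
  { intros t Ht. unfold D. apply Rmult_lt_0_compat; [lra | apply HA; lra]. }
  set (D0 := D t0) in *.
  assert (HD0 : 0 < D0) by (apply HDp; lra).
  assert (HF0p : 0 < F0) by (apply HFpos; lra).
  set (nu := Rmin 1 (Rmin (K1 * Rpower F0 (p - 1) / (K0 + 1)) (D0 / F0))).
  assert (Hnu1 : nu <= 1) by apply Rmin_l.
  assert (Hnu2 : nu <= K1 * Rpower F0 (p - 1) / (K0 + 1))
    by (eapply Rle_trans; [apply Rmin_r | apply Rmin_l]).
  assert (Hnu3 : nu <= D0 / F0) by (eapply Rle_trans; [apply Rmin_r | apply Rmin_r]).
  assert (Hnup : 0 < nu).
  { unfold nu. apply Rmin_pos. lra. apply Rmin_pos; apply Rdiv_lt_0_compat; try lra.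
    generalize (Rpow_pos F0 (p - 1)); nra. }
  assert (Hnu2' : nu * (K0 + 1) <= K1 * Rpower F0 (p - 1)).
  { apply Rmult_le_compat_r with (r := K0 + 1) in Hnu2; [|lra].
    replace (K1 * Rpower F0 (p - 1) / (K0 + 1) * (K0 + 1)) with (K1 * Rpower F0 (p - 1)) in Hnu2
      by (field; lra). exact Hnu2. }
  assert (Hnu3' : nu * F0 <= D0).
  { apply Rmult_le_compat_r with (r := F0) in Hnu3; [|lra].
    replace (D0 / F0 * F0) with D0 in Hnu3 by (field; lra). exact Hnu3. }
  assert (HPsplit : forall t, t0 <= t -> Rpower (F t) p = Rpower (F t) (p - 1) * F t).
  { intros t Ht. rewrite <- Rpow_p1 by (apply HFpos; lra). f_equal; ring. }
  assert (HPlow : forall t, t0 <= t -> Rpower F0 (p - 1) <= Rpower (F t) (p - 1)).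
  { intros t Ht. apply Rle_Rpower_l. lra. split. lra. apply HFm; lra. }
  assert (HC : forall t, t0 <= t -> nu * F t <= D t).
  { set (c := K0 + nu).
    assert (Hg : forall x, t0 <= x -> is_derive (fun t => Rpower (1 + t) c * (D t - nu * F t)) x
        (c * Rpower (1 + x) (c - 1) * 1 * (D x - nu * F x) + Rpower (1 + x) c * (D' x - nu * F1 x))).
    { intros x Hx. apply (der_mult (fun t => Rpower (1 + t) c) (fun t => D t - nu * F t)).
      apply (der_Rpow (fun t => 1 + t)). lra. apply der_id1.
      apply (der_minus D (fun t => nu * F t)). apply HDd; lra.
      apply (der_scal F). apply HD; lra. }
    assert (Hm := mono _ _ t0 Hg).
    intros t Ht.
    assert (Hle : Rpower (1 + t0) c * (D t0 - nu * F t0) <= Rpower (1 + t) c * (D t - nu * F t)).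
    { apply Hm; [|lra|lra]. intros x Hx.
      rewrite Rpow_m1 by lra.
      assert (E : c * (Rpower (1 + x) c * / (1 + x)) * 1 * (D x - nu * F x) + Rpower (1 + x) c * (D' x - nu * F1 x)
        = Rpower (1 + x) c * / (1 + x) * (c * (D x - nu * F x) + (1 + x) * (D' x - nu * F1 x)))
        by (field; lra).
      rewrite E. apply Rmult_le_pos.
      { apply Rmult_le_pos. left; apply Rpow_pos. left; apply Rinv_0_lt_compat; lra. }
      assert (Hb := HB x Hx). fold (D' x) (D x) in Hb.
      assert (E2 : (1 + x) * (nu * F1 x) = nu * D x) by (unfold D; ring).
      rewrite HPsplit in Hb by lra.
      assert (HL := HPlow x Hx). assert (HFx := HFpos x Hx).
      assert (Hx1 : nu * (K0 + 1) * F x <= K1 * Rpower (F x) (p - 1) * F x).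
      { apply Rmult_le_compat_r. lra. apply Rle_trans with (1 := Hnu2').
        apply Rmult_le_compat_l; lra. }
      assert (Hx2 : nu * (K0 + nu) * F x <= nu * (K0 + 1) * F x).
      { apply Rmult_le_compat_r. lra. apply Rmult_le_compat_l; lra. }
      assert (E3 : c * (D x - nu * F x) + (1 + x) * (D' x - nu * F1 x)
        = (1 + x) * D' x + K0 * D x - (K0 + nu) * nu * F x) by (unfold c, D; ring).
      rewrite E3. unfold D' in Hb |- *. lra. }
    fold D0 in Hle. change (F t0) with F0 in Hle.
    assert (0 <= Rpower (1 + t0) c * (D0 - nu * F0)) by (apply Rmult_le_pos; [left; apply Rpow_pos | lra]).
    assert (Hpp := Rpow_pos (1 + t) c). nra. }

  set (Q0 := Rpower F0 (p + 1)).
  assert (HQ0 : 0 < Q0) by apply Rpow_pos.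
  set (lam := Rmin (K1 / (p + 1)) (Rmin (K1 * nu / (2 * K0)) (D0 * D0 / Q0))).
  assert (Hl1 : lam * (p + 1) <= K1).
  { assert (lam <= K1 / (p + 1)) by apply Rmin_l.
    apply Rmult_le_compat_r with (r := p + 1) in H; [|lra].
    replace (K1 / (p + 1) * (p + 1)) with K1 in H by (field; lra). exact H. }
  assert (Hl2 : lam * (2 * K0) <= K1 * nu).
  { assert (lam <= K1 * nu / (2 * K0)) by (eapply Rle_trans; [apply Rmin_r | apply Rmin_l]).
    apply Rmult_le_compat_r with (r := 2 * K0) in H; [|lra].
    replace (K1 * nu / (2 * K0) * (2 * K0)) with (K1 * nu) in H by (field; lra). exact H. }
  assert (Hl3 : lam * Q0 <= D0 * D0).
  { assert (lam <= D0 * D0 / Q0) by (eapply Rle_trans; [apply Rmin_r | apply Rmin_r]).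
    apply Rmult_le_compat_r with (r := Q0) in H; [|lra].
    replace (D0 * D0 / Q0 * Q0) with (D0 * D0) in H by (field; lra). exact H. }
  assert (Hlp : 0 < lam).
  { unfold lam. apply Rmin_pos. apply Rdiv_lt_0_compat; lra.
    apply Rmin_pos; apply Rdiv_lt_0_compat; nra. }
  assert (HQsplit : forall t, t0 <= t -> Rpower (F t) (p + 1) = Rpower (F t) p * F t).
  { intros t Ht. apply Rpow_p1. apply HFpos; lra. }
  assert (HDsq : forall t, t0 <= t -> lam * Rpower (F t) (p + 1) <= D t * D t).
  { set (c := 2 * K0).
    assert (Hg : forall x, t0 <= x -> is_derive
        (fun t => Rpower (1 + t) c * (D t * D t - lam * Rpower (F t) (p + 1))) x
        (c * Rpower (1 + x) (c - 1) * 1 * (D x * D x - lam * Rpower (F x) (p + 1))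
         + Rpower (1 + x) c * ((D' x * D x + D x * D' x)
              - lam * ((p + 1) * Rpower (F x) (p + 1 - 1) * F1 x)))).
    { intros x Hx. apply (der_mult (fun t => Rpower (1 + t) c)
          (fun t => D t * D t - lam * Rpower (F t) (p + 1))).
      apply (der_Rpow (fun t => 1 + t)). lra. apply der_id1.
      apply (der_minus (fun t => D t * D t) (fun t => lam * Rpower (F t) (p + 1))).
      apply (der_mult D D); apply HDd; lra.
      apply (der_scal (fun t => Rpower (F t) (p + 1))).
      apply (der_Rpow F). apply HFpos; lra. apply HD; lra. }
    assert (Hm := mono _ _ t0 Hg).
    intros t Ht.
    assert (Hle : Rpower (1 + t0) c * (D t0 * D t0 - lam * Rpower (F t0) (p + 1))
                <= Rpower (1 + t) c * (D t * D t - lam * Rpower (F t) (p + 1))).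
    { apply Hm; [|lra|lra]. intros x Hx.
      rewrite Rpow_m1 by lra. replace (p + 1 - 1) with p by ring.
      set (Px := Rpower (F x) p).
      assert (E : c * (Rpower (1 + x) c * / (1 + x)) * 1 * (D x * D x - lam * Rpower (F x) (p + 1))
         + Rpower (1 + x) c * ((D' x * D x + D x * D' x) - lam * ((p + 1) * Px * F1 x))
        = Rpower (1 + x) c * / (1 + x) * (c * (D x * D x - lam * Rpower (F x) (p + 1))
           + 2 * D x * ((1 + x) * D' x) - lam * (p + 1) * Px * D x))
        by (unfold D; field; lra).
      rewrite E. apply Rmult_le_pos.
      { apply Rmult_le_pos. left; apply Rpow_pos. left; apply Rinv_0_lt_compat; lra. }
      assert (Hb := HB x Hx). fold (D' x) (D x) Px in Hb.
      rewrite HQsplit by lra. fold Px.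
      assert (HPx : 0 < Px) by apply Rpow_pos.
      assert (HDx := HDp x Hx). assert (HFx := HFpos x Hx). assert (HCx := HC x Hx).
      assert (H1 : 2 * D x * ((1 + x) * D' x) >= 2 * D x * (K1 * Px - K0 * D x)).
      { apply Rle_ge, Rmult_le_compat_l; [lra | unfold D' in *; lra]. }
      assert (H2 : lam * (p + 1) * Px * D x <= K1 * Px * D x).
      { apply Rmult_le_compat_r. lra. apply Rmult_le_compat_r; lra. }
      assert (H3 : c * lam * (Px * F x) <= K1 * Px * D x).
      { replace (c * lam * (Px * F x)) with ((lam * (2 * K0)) * (Px * F x)) by (unfold c; ring).
        apply Rle_trans with (K1 * nu * (Px * F x)).
        apply Rmult_le_compat_r; [nra | lra].
        replace (K1 * Px * D x) with (K1 * Px * D x) by ring.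
        assert (K1 * Px * (nu * F x) <= K1 * Px * D x) by (apply Rmult_le_compat_l; nra).
        nra. }
      unfold c in *. nra. }
    fold D0 in Hle. change (F t0) with F0 in Hle. fold Q0 in Hle.
    assert (0 <= Rpower (1 + t0) c * (D0 * D0 - lam * Q0)) by (apply Rmult_le_pos; [left; apply Rpow_pos | lra]).
    assert (Hpp := Rpow_pos (1 + t) c). nra. }

  set (r := (p - 1) / 2).
  assert (Hr : 0 < r) by (unfold r; lra).
  set (mu := sqrt lam).
  assert (Hmu : 0 < mu) by (apply sqrt_lt_R0; exact Hlp).
  assert (HDR : forall t, t0 <= t -> mu * Rpower (F t) (r + 1) <= D t).
  { intros t Ht. assert (HH := HDsq t Ht).
    assert (E : Rpower (F t) (p + 1) = Rpower (F t) (r + 1) * Rpower (F t) (r + 1)).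
    { rewrite <- Rpower_plus. f_equal. unfold r; field. }
    rewrite E in HH. assert (El : lam = mu * mu) by (unfold mu; rewrite sqrt_sqrt; lra).
    rewrite El in HH. assert (HR := Rpow_pos (F t) (r + 1)). assert (HDt := HDp t Ht).
    nra. }
  set (psi := fun t => Rpower (F t) (- r) + r * mu * ln (1 + t)).
  assert (Hpsi : forall x, t0 <= x -> is_derive psi x
      ((- r) * Rpower (F x) (- r - 1) * F1 x + r * mu * / (1 + x))).
  { intros x Hx. unfold psi. apply (der_plus (fun t => Rpower (F t) (- r)) (fun t => r * mu * ln (1 + t))).
    apply (der_Rpow F). apply HFpos; lra. apply HD; lra.
    apply (der_scal (fun t => ln (1 + t))). apply der_ln1. lra. }
  assert (Hdec := mono_dec _ _ t0 Hpsi).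
  assert (Hps : forall t, t0 <= t -> psi t <= psi t0).
  { intros t Ht. apply Hdec; [|lra|lra]. intros x Hx.
    assert (HR := HDR x Hx). unfold D in HR.
    assert (E : Rpower (F x) (- r - 1) * Rpower (F x) (r + 1) = 1).
    { rewrite <- Rpower_plus. replace (- r - 1 + (r + 1)) with 0 by ring. apply Rpower_O. apply HFpos; lra. }
    assert (HS := Rpow_pos (F x) (- r - 1)).
    assert (H1 : mu * Rpower (F x) (r + 1) * Rpower (F x) (- r - 1)
              <= (1 + x) * F1 x * Rpower (F x) (- r - 1)) by (apply Rmult_le_compat_r; lra).
    assert (H2 : mu <= (1 + x) * (F1 x * Rpower (F x) (- r - 1))).
    { assert (E' : mu * Rpower (F x) (r + 1) * Rpower (F x) (- r - 1) = mu).
      { rewrite Rmult_assoc, (Rmult_comm (Rpower (F x) (r + 1))), E. ring. }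
      rewrite E' in H1. lra. }
    assert (H3 : mu * / (1 + x) <= F1 x * Rpower (F x) (- r - 1)).
    { apply Rmult_le_reg_l with (1 + x). lra.
      replace ((1 + x) * (mu * / (1 + x))) with mu by (field; lra). exact H2. }
    assert (H4 : r * (mu * / (1 + x)) <= r * (F1 x * Rpower (F x) (- r - 1))) by (apply Rmult_le_compat_l; lra).
    lra. }
  set (M := psi t0 / (r * mu)).
  set (t := t0 + exp M).
  assert (Ht : t0 <= t) by (unfold t; generalize (exp_pos M); lra).
  assert (Hln : M <= ln (1 + t)).
  { rewrite <- (ln_exp M) at 1. apply ln_le. apply exp_pos. unfold t; lra. }
  assert (Hrm : 0 < r * mu) by nra.
  assert (Hx1 : psi t0 <= r * mu * ln (1 + t)).
  { replace (psi t0) with (r * mu * M) by (unfold M; field; lra).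
    apply Rmult_le_compat_l; lra. }
  assert (Hx2 := Hps t Ht). unfold psi in Hx2 at 1.
  assert (Hx3 := Rpow_pos (F t) (- r)).
  lra.
Qed.
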